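(* Let $p\ge3$ and consider the 1D FUSE semi-discretisation (context) of $\partial_t u+\partial_x F(u)=0$, with $F$ continuously differentiable, on a periodic mesh, using as reference nodes the Gauss–Legendre-plus-endpoints nodes: $r_0=-1$, $r_p=1$, and $r_1<\dots<r_{p-1}$ the $p-1$ Gauss–Legendre quadrature points on $[-1,1]$ with weights $\omega_1,\dots,\omega_{p-1}$. For each element define $\bar u_k=\tfrac12\sum_{i=1}^{p-1}\omega_i\,u_{i,k}$. Then (i) $\bar u_k=\frac{1}{|K_k|}\int_{K_k}u_h\,dx$, where $u_h|_{K_k}$ is the degree-$\le p$ interpolant of the nodal values on $K_k$; (ii) along solutions of the FUSE semi-discretisation, $$\frac{d\bar u_k}{dt}+\frac{1}{|K_k|}\Big(F(u_{p,k})-F(u_{0,k})\Big)=0\quad\text{for every }k;$$ and consequently (iii) $\frac{d}{dt}\sum_{k=1}^N |K_k|\,\bar u_k=0$, i.e. $\int_\Omega u_h\,dx$ is conserved (for a uniform mesh, $\sum_k\bar u_k$ is conserved).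
   Context: Setting: $\Omega=[0,1]$, periodic, mesh $0=x_0<\dots<x_N=1$, elements $K_k=[x_{k-1},x_k]$ (indices mod $N$), $|K_k|=x_k-x_{k-1}$. Nodes $s_{i,k}=x_{k-1}+\tfrac{r_i+1}{2}|K_k|$, $i=0,\dots,p$, with boundary nodes shared ($s_{p,k}=s_{0,k+1}$, a single nodal value, so $u_{p,k}=u_{0,k+1}$). $F_h^{(k)}$ is the polynomial of degree $\le p$ on $K_k$ with $F_h^{(k)}(s_{i,k})=F(u_{i,k})$. FUSE semi-discretisation: interior nodes $\frac{d}{dt}u_{i,k}=-(F_h^{(k)})'(s_{i,k})$ for $1\le i\le p-1$; at a shared node $s=s_{p,k}=s_{0,k+1}$ with value $u_s$, $\frac{d}{dt}u_s=-(F_h^{(k)})'(s)$ if $F'(u_s)>0$ and $-(F_h^{(k+1)})'(s)$ otherwise. *)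

(* Defs.v *)
From HB Require Import structures.
From mathcomp Require Import all_boot all_order all_algebra.
From mathcomp Require Import all_classical all_reals all_analysis.
Set Implicit Arguments. Unset Strict Implicit. Unset Printing Implicit Defensive.
Import Order.TTheory GRing.Theory Num.Theory.
Import numFieldNormedType.Exports.
Local Open Scope classical_set_scope.
Local Open Scope ring_scope.

Definition integ {R : realType} (a b : R) (f : R -> R) : R :=
  \int[(@lebesgue_measure R)]_(x in `[a, b]) f x.

(* n-point Gauss-Legendre rule on [-1,1], nodes r 1 < ... < r n, weights w 1..w n:
   the (unique) n-point rule with nodes in (-1,1) that is exact for all
   polynomials of degree <= 2n-1. *)
Definition gauss_legendre {R : realType} (n : nat) (r w : nat -> R) : Prop :=
  [/\ (forall i, (1 <= i <= n)%N -> -1 < r i < 1),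
      (forall i j, (1 <= i)%N -> (i < j)%N -> (j <= n)%N -> r i < r j) &
      (forall q : {poly R}, (size q <= 2 * n)%N ->
          \sum_(1 <= i < n.+1) w i * q.[r i] = integ (-1) 1 (fun y => q.[y]))].

Definition lagrange {R : realType} (p : nat) (xs ys : nat -> R) : {poly R} :=
  \sum_(i < p.+1) ys i *:
     \prod_(j < p.+1 | j != i) (('X - (xs j)%:P) * ((xs i - xs j)^-1)%:P).

(* Mesh 0 = x_0 < x_1 < ... < x_N = 1; elements are 0-based: K_k = [x k, x (k+1)],
   k = 0..N-1 (paper's K_{k+1}); neighbour indices are taken mod N. *)
Definition periodic_mesh {R : realType} (N : nat) (x : nat -> R) : Prop :=
  x 0%N = 0 /\ x N = 1 /\ (forall k, (k < N)%N -> x k < x k.+1).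

Definition elen {R : realType} (x : nat -> R) (k : nat) : R := x k.+1 - x k.

Definition node {R : realType} (r x : nat -> R) (k i : nat) : R :=
  x k + (r i + 1) / 2 * elen x k.

(* Nodal values: a single global array v (index j < N*p, time t), shared nodes
   stored once: u_{i,k} = v ((k*p + i) mod (N*p)), so u_{p,k} = u_{0,k+1}
   (periodically). *)
Definition uval {R : realType} (N p : nat) (v : nat -> R -> R) (k i : nat) (t : R) : R :=
  v ((k * p + i) %% (N * p))%N t.

Definition uh {R : realType} (N p : nat) (r x : nat -> R) (v : nat -> R -> R)
  (k : nat) (t : R) : {poly R} :=
  lagrange p (node r x k) (fun i => uval N p v k i t).

Definition Fh {R : realType} (N p : nat) (r x : nat -> R) (F : R -> R)
  (v : nat -> R -> R) (k : nat) (t : R) : {poly R} :=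
  lagrange p (node r x k) (fun i => F (uval N p v k i t)).

Definition ubar {R : realType} (N p : nat) (w : nat -> R) (v : nat -> R -> R)
  (k : nat) (t : R) : R :=
  2^-1 * \sum_(1 <= i < p) w i * uval N p v k i t.

Definition fuse_ode {R : realType} (N p : nat) (r x : nat -> R) (F : R -> R)
  (v : nat -> R -> R) (t : R) : Prop :=
  (forall j, (j < N * p)%N -> derivable (v j) t 1) /\
  (forall k i, (k < N)%N -> (1 <= i)%N -> (i < p)%N ->
     derive1 (uval N p v k i) t = - (deriv (Fh N p r x F v k t)).[node r x k i]) /\
  (forall k, (k < N)%N ->
     derive1 (uval N p v k p) t =
       if 0 < derive1 F (uval N p v k p t)
       then - (deriv (Fh N p r x F v k t)).[node r x k p]
       else - (deriv (Fh N p r x F v (k.+1 %% N) t)).[node r x (k.+1 %% N) 0%N]).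

(* Main.v *)
Require Import Defs.
From HB Require Import structures.
From mathcomp Require Import all_boot all_order all_algebra.
From mathcomp Require Import all_classical all_reals all_analysis.
From mathcomp Require Import zify ring lra.
Import Order.TTheory GRing.Theory Num.Theory.
Import numFieldNormedType.Exports.
Local Open Scope classical_set_scope.
Local Open Scope ring_scope.

Lemma integ_deriv {R : realType} (a b : R) (Q : {poly R}) : a < b ->
  integ a b (fun y => (Q^`()).[y]) = Q.[b] - Q.[a].
Proof.
move=> ab; rewrite /integ /Rintegral.
rewrite (@continuous_FTC2 _ _ (horner Q)) //.
- apply/continuous_subspaceT => z; exact: continuous_horner.
- split=> [z _| |].
  + exact: derivable_horner.
  + by apply: cvg_at_right_filter; exact: continuous_horner.
  + by apply: cvg_at_left_filter; exact: continuous_horner.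
- by move=> z _; rewrite -derivE.
Qed.

Definition prim {R : realType} (P : {poly R}) : {poly R} :=
  \poly_(i < (size P).+1) (P`_i.-1 / i%:R).

Lemma prim_deriv {R : realType} (P : {poly R}) : (prim P)^`() = P.
Proof.
apply/polyP => i; rewrite coef_deriv coef_poly.
case: ltnP => H.
  by rewrite -(mulr_natr (P`_i.+1.-1 / i.+1%:R)) -mulrA mulVf ?mulr1 // pnatr_eq0.
by rewrite mul0rn nth_default.
Qed.

Lemma lagrange_node {R : realType} p (xs ys : nat -> R) (j : nat) : (j <= p)%N ->
  (forall a b, (a <= p)%N -> (b <= p)%N -> a != b -> xs a != xs b) ->
  (Defs.lagrange p xs ys).[xs j] = ys j.
Proof.
move=> jp D; have jp' : (j < p.+1)%N by [].
rewrite /Defs.lagrange horner_sum (bigD1 (Ordinal jp')) //= [X in _ + X]big1 ?addr0.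
- rewrite hornerZ horner_prod [X in _ * X]big1 ?mulr1 // => k kj.
  rewrite hornerM !hornerE mulfV // subr_eq0 D //; first by rewrite -ltnS.
  by rewrite eq_sym.
- move=> i ij; rewrite hornerZ horner_prod (bigD1 (Ordinal jp')) /=; last by rewrite eq_sym.
  by rewrite hornerM hornerXsubC subrr !mul0r mulr0.
Qed.

Lemma size_prodlin {R : realType} (I : Type) (s : seq I) (P : pred I) (a b : I -> R) :
  leq (size (\prod_(j <- s | P j) (('X - (a j)%:P) * (b j)%:P))) (count P s).+1.
Proof.
elim: s => [|h s IH]; first by rewrite big_nil size_poly1.
rewrite big_cons /=; case: (P h) => //=.
apply: leq_trans (size_mul_leq _ _) _.
have H1 : leq (size (('X - (a h)%:P) * (b h)%:P)) 2.
  apply: leq_trans (size_mul_leq _ _) _.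
  by rewrite size_XsubC; have := size_polyC_leq1 (b h); case: (size _) => [|[|]].
move: H1 IH; case: (size _) => [|m]; case: (size _) => [|n] //=; lia.
Qed.

Lemma count_neq p (i : 'I_p.+1) : count (fun j => j != i) (index_enum 'I_p.+1) = p.
Proof.
have := cardC1 i; rewrite card_ord /= => E.
rewrite -[in RHS]E cardE /enum_mem -size_filter /=.
by rewrite /index_enum; case: index_enum_key.
Qed.

Lemma size_lagrange {R : realType} p (xs ys : nat -> R) :
  (size (Defs.lagrange p xs ys) <= p.+1)%N.
Proof.
rewrite /Defs.lagrange; apply: (leq_trans (size_sum _ _ _)).
apply/bigmax_leqP => i _.
apply: leq_trans (size_scale_leq _ _) _.
by have := @size_prodlin R _ (index_enum 'I_p.+1) (fun j => j != i) (fun j : 'I_p.+1 => xs j) (fun j : 'I_p.+1 => (xs i - xs j)^-1); rewrite count_neq.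
Qed.

Lemma size_deriv_le {R : realType} (Q : {poly R}) : leq (size Q^`()) (size Q).-1.
Proof.
have [->|Q0] := eqVneq Q 0; first by rewrite deriv0 size_poly0.
by have := lt_size_deriv Q0; case: (size Q).
Qed.

Lemma gl_elem {R : realType} n (r w : nat -> R) (a h : R) (Q : {poly R}) :
  gauss_legendre n r w -> (0 < n)%N -> h != 0 -> leq (size Q) (2*n).+1 ->
  \sum_(1 <= i < n.+1) w i * (Q^`()).[a + (r i + 1) / 2 * h] = 2 / h * (Q.[a + h] - Q.[a]).
Proof.
case=> _ _ GL n0 hn0 sQ.
pose A : {poly R} := (h/2) *: 'X + (a + h/2)%:P.
have dA : A^`() = (h/2)%:P.
  by rewrite /A derivD derivZ derivX derivC addr0 -alg_polyC.
have hA y : A.[y] = a + (y + 1)/2*h.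
  by rewrite /A hornerD hornerZ hornerX hornerC; ring.
have sA : leq (size A) 2.
  rewrite /A; apply: leq_trans (size_add _ _) _; rewrite geq_max.
  apply/andP; split; first by apply: leq_trans (size_scale_leq _ _) _; rewrite size_polyX.
  by apply: leq_trans (size_polyC_leq1 _) _.
have qE : Q^`() \Po A = ((2/h) *: (Q \Po A))^`().
  rewrite derivZ deriv_comp dA [_ * (h/2)%:P]mulrC mul_polyC scalerA.
  by rewrite (_ : 2 / h * (h / 2) = 1) ?scale1r //; field.
have sq : leq (size (Q^`() \Po A)) (2*n).
  apply: leq_trans (size_comp_poly_leq _ _) _.
  have h1 : leq ((size A).-1) 1 by move: sA; case: (size A) => [|[|[|]]].
  have h2 := size_deriv_le Q.
  have h3 : leq ((size Q^`()).-1 * (size A).-1) (size Q^`()).-1.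
    by rewrite -{2}[(size Q^`()).-1]muln1 leq_mul2l h1 orbT.
  move: h3 h2 sQ n0; move: ((size Q^`()).-1 * (size A).-1)%N => m.
  move: (size Q^`()) (size Q) => k l; lia.
have := GL _ sq.
rewrite qE integ_deriv; last by rewrite (lt_trans (ltrN10 R)).
rewrite !hornerZ !horner_comp !hA -mulrBr.
rewrite (_ : a + (1 + 1) / 2 * h = a + h); last by lra.
rewrite (_ : a + (-1 + 1) / 2 * h = a); last by lra.
move=> <-; apply: eq_bigr => i _.
by rewrite -qE horner_comp hA.
Qed.


Lemma is_derive_lincomb {R : realType} (I : eqType) (s : seq I) (c : I -> R)
  (f : I -> R -> R) (t : R) :
  (forall i, i \in s -> derivable (f i) t 1) ->
  is_derive t 1 (fun u => \sum_(i <- s) c i * f i u)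
     (\sum_(i <- s) c i * derive1 (f i) t).
Proof.
elim: s => [|h s IH] H.
  have -> : (fun u => \sum_(i <- [::]) c i * f i u) = cst 0.
    by apply/funext => u; rewrite big_nil.
  by rewrite big_nil; exact: is_derive_cst.
have -> : (fun u => \sum_(i <- h :: s) c i * f i u) =
    (c h \*: f h + (fun u => \sum_(i <- s) c i * f i u))%R.
  by apply/funext => u; rewrite big_cons.
rewrite big_cons; apply: is_deriveD.
  rewrite derive1E; apply: is_deriveZ; apply: derivableP; apply: H.
  by rewrite inE eqxx.
by apply: IH => i si; apply: H; rewrite inE si orbT.
Qed.

Section Main.
Variables (R : realType) (p N : nat) (x r w : nat -> R) (v : nat -> R -> R).
Hypotheses (p3 : (3 <= p)%N) (mesh : periodic_mesh N x) (r0 : r 0%N = -1) (rp : r p = 1)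
  (GL : gauss_legendre p.-1 r w).

Lemma r_lt a b : (a < b)%N -> (b <= p)%N -> r a < r b.
Proof.
case: GL => Hin Hord _ ab bp.
have [a0|a0] := eqVneq a 0%N.
  subst a; rewrite r0.
  have [bp'|bp'] := eqVneq b p; first by subst b; rewrite rp (lt_trans (ltrN10 R)).
  have /andP[+ _] := Hin b (ltac:(apply/andP; split; lia)); by [].
have [bp'|bp'] := eqVneq b p.
  subst b; rewrite rp; have /andP[_ +] := Hin a (ltac:(apply/andP; split; lia)); by [].
apply: Hord; lia.
Qed.

Lemma elen_gt0 k : (k < N)%N -> 0 < elen x k.
Proof. by case: mesh => _ [_ H] kN; rewrite /elen subr_gt0 H. Qed.

Lemma node_neq k : (k < N)%N ->
  forall a b, (a <= p)%N -> (b <= p)%N -> a != b -> node r x k a != node r x k b.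
Proof.
move=> kN a b ap bp ab.
have hn0 : elen x k != 0 by rewrite gt_eqF // elen_gt0.
wlog lab : a b ap bp ab / (a < b)%N.
  move=> W; have [l|l|e] := ltngtP a b; first exact: W.
    by rewrite eq_sym; apply: W => //; rewrite eq_sym.
  by rewrite e eqxx in ab.
apply/negP => /eqP E.
move: E; rewrite /node => /addrI /(mulIf hn0) E.
have := @r_lt a b lab bp; lra.
Qed.

Lemma node0 k : node r x k 0 = x k.
Proof. by rewrite /node r0 addNr mul0r mul0r addr0. Qed.

Lemma nodep k : node r x k p = x k.+1.
Proof.
rewrite /node rp (_ : (1 + 1) / 2 = 1 :> R); last lra.
by rewrite mul1r /elen addrC subrK.
Qed.

Lemma size_prim (P : {poly R}) : leq (size (prim P)) (size P).+1.
Proof. exact: size_poly. Qed.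

Lemma part1 k s : (k < N)%N ->
  ubar N p w v k s = (elen x k)^-1 * integ (x k) (x k.+1) (fun y => (uh N p r x v k s).[y]).
Proof.
move=> kN.
have hn0 : elen x k != 0 by rewrite gt_eqF // elen_gt0.
set P := uh N p r x v k s.
have -> : (fun y => P.[y]) = (fun y => ((prim P)^`()).[y]) by rewrite prim_deriv.
have xk1 : x k.+1 = x k + elen x k by rewrite /elen addrC subrK.
have lt : x k < x k.+1 by case: mesh => _ [_ H]; apply: H.
rewrite integ_deriv // xk1.
have sP : leq (size (prim P)) (2 * p.-1).+1.
  apply: leq_trans (size_prim _) _.
  apply: leq_trans (_ : leq _ p.+2) _; first by rewrite ltnS size_lagrange.
  lia.
have := @gl_elem R p.-1 r w (x k) (elen x k) (prim P) GL (ltac:(lia)) hn0 sP.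
rewrite prednK; last lia.
move=> G.
transitivity (2^-1 * (2 / elen x k * ((prim P).[x k + elen x k] - (prim P).[x k]))); last first.
  by rewrite mulrA mulrA mulVf ?pnatr_eq0 // mul1r.
rewrite -G /ubar prim_deriv.
congr (_ * _); apply: eq_big_nat => i /andP[i1 ip].
rewrite /P /uh -/(node r x k i) lagrange_node //; first lia.
by move=> a b ap bp ab; apply: node_neq.
Qed.

Lemma N_gt0 : (0 < N)%N.
Proof.
case: mesh => x0 [xN _]; case: N xN => // xN.
by move: (oner_neq0 R); rewrite -xN x0 eqxx.
Qed.

Lemma uval_derivable (F : R -> R) t k i : fuse_ode N p r x F v t ->
  derivable (uval N p v k i) t 1.
Proof.
case=> Hd _; apply: Hd; apply: ltn_pmod.
by rewrite muln_gt0 N_gt0; lia.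
Qed.

Lemma part2 (F : R -> R) t k : (k < N)%N -> fuse_ode N p r x F v t ->
  derivable (ubar N p w v k) t 1 /\ derive1 (ubar N p w v k) t = - ((elen x k)^-1 * (F (uval N p v k p t) - F (uval N p v k 0%N t))).
Proof.
move=> kN FO.
have hn0 : elen x k != 0 by rewrite gt_eqF // elen_gt0.
have D := @is_derive_lincomb R _ (index_iota 1 p) w (fun i => uval N p v k i) t
  (fun i _ => @uval_derivable F t k i FO).
have -> : ubar N p w v k = 2^-1 \*: (fun u => \sum_(i <- index_iota 1 p) w i * uval N p v k i u).
  by apply/funext => u.
have DZ := is_deriveZ (2^-1 : R) D.
split; first exact: ex_derive.
rewrite derive1E derive_val.
case: FO => _ [Hint _].
set Q := Fh N p r x F v k t.
have sQ : leq (size Q) (2 * p.-1).+1.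
  apply: leq_trans (size_lagrange _ _ _) _; lia.
have := @gl_elem R p.-1 r w (x k) (elen x k) Q GL (ltac:(lia)) hn0 sQ.
rewrite prednK; last lia.
have nd : forall a b, (a <= p)%N -> (b <= p)%N -> a != b -> node r x k a != node r x k b.
  by move=> a b ap bp ab; apply: node_neq.
have e1 : Q.[x k + elen x k] = F (uval N p v k p t).
  rewrite (_ : x k + elen x k = x k.+1); last by rewrite /elen addrC subrK.
  by rewrite -(nodep k) /Q /Fh lagrange_node.
have e0 : Q.[x k] = F (uval N p v k 0 t).
  by rewrite -{1}(node0 k) /Q /Fh lagrange_node.
rewrite e1 e0.
move=> G.
transitivity (- (2^-1 * (2 / elen x k * (F (uval N p v k p t) - F (uval N p v k 0 t))))); last first.
  by rewrite mulrA mulrA mulVf ?pnatr_eq0 // mul1r.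
rewrite -G -mulrN -sumrN.
rewrite -[_ *: _]/(_ * _).
congr (_ * _); apply: eq_big_nat => i /andP[i1 ip].
by rewrite Hint // mulrN.
Qed.
End Main.
Theorem mainTheorem4 (R : realType) (p N : nat) (x r w : nat -> R)
    (F : R -> R) (v : nat -> R -> R) (t : R) :
  (3 <= p)%N ->
  periodic_mesh N x ->
  (forall y, derivable F y 1) -> continuous (derive1 F) ->
  r 0%N = -1 -> r p = 1 -> gauss_legendre p.-1 r w ->
  fuse_ode N p r x F v t ->
  (* (i) *)
  (forall k, (k < N)%N ->
     ubar N p w v k t = (elen x k)^-1 * integ (x k) (x k.+1) (fun y => (uh N p r x v k t).[y]))
  (* (ii) *)
  /\ (forall k, (k < N)%N ->
     derivable (ubar N p w v k) t 1 /\
     derive1 (ubar N p w v k) t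
       + (elen x k)^-1 * (F (uval N p v k p t) - F (uval N p v k 0%N t)) = 0)
  (* (iii) *)
  /\ (derivable (fun s => \sum_(k < N) elen x k * ubar N p w v k s) t 1 /\
      derive1 (fun s => \sum_(k < N) elen x k * ubar N p w v k s) t = 0)
  /\ (derivable (fun s => \sum_(k < N) integ (x k) (x k.+1) (fun y => (uh N p r x v k s).[y])) t 1 /\
      derive1 (fun s => \sum_(k < N) integ (x k) (x k.+1) (fun y => (uh N p r x v k s).[y])) t = 0).
Proof.
move=> p3 mesh _ _ r0 rp GL FO.
have P1 := @part1 R p N x r w v p3 mesh r0 rp GL.
have P2 := @part2 R p N x r w v p3 mesh r0 rp GL.
split; first by move=> k kN; apply: P1.
split.
  move=> k kN; have [d e] := P2 F t k kN FO; split => //.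
  by rewrite e addNr.
have D := @is_derive_lincomb R _ (index_enum 'I_N) (fun k : 'I_N => elen x k)
  (fun k : 'I_N => ubar N p w v k) t (fun k _ => (P2 F t k (ltn_ord k) FO).1).
have iii : derivable (fun s => \sum_(k < N) elen x k * ubar N p w v k s) t 1 /\
      derive1 (fun s => \sum_(k < N) elen x k * ubar N p w v k s) t = 0.
  case: D => D1 D2.
  split; first exact: D1.
  rewrite derive1E D2.
  pose G k := F (uval N p v k 0 t).
  rewrite (eq_bigr (fun k : 'I_N => - (G k.+1 - G k))); last first.
    move=> k _; rewrite (P2 F t k (ltn_ord k) FO).2 mulrN mulrA mulfV ?mul1r;
      last by rewrite gt_eqF // (@elen_gt0 R N x mesh).
    by rewrite /G /uval; congr (- (F (v _ t) - _)); rewrite addn0 mulSn addnC.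
  rewrite sumrN -(big_mkord xpredT (fun k => G k.+1 - G k)) telescope_sumr //.
  by rewrite /G /uval addn0 modnn mul0n mod0n subrr oppr0.
split; first exact: iii.
have -> : (fun s => \sum_(k < N) integ (x k) (x k.+1) (fun y => (uh N p r x v k s).[y])) =
    (fun s => \sum_(k < N) elen x k * ubar N p w v k s).
  apply/funext => s; apply: eq_bigr => k _.
  rewrite (P1 k s (ltn_ord k)) mulrA mulfV ?mul1r //.
  by rewrite gt_eqF // (@elen_gt0 R N x mesh).
exact: iii.
Qed.
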